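(* Let $\lambda>0$ and $\theta\in(0,\pi/2)$. For each $m>0$ set $n=m\tan\theta$, $X=(\lambda,0)$, $Y=(0,0)$, $Z=(m,n)$, and let $\varphi_m(\alpha,\beta)=\frac12(\alpha^2+2b\alpha\beta+a\beta^2)+c\alpha+d\beta$ be the conic satisfying (P1) $\varphi_m(X)=\varphi_m(Y)=\varphi_m(Z)=0$ and (P2) $Y-X$ is a positive multiple of $-\nabla\varphi_m(X)$ and $Z-Y$ is a positive multiple of $-\nabla\varphi_m(Y)$. Call $\{\varphi_m=0\}$ admissible if it is an ellipse. Then the set of centers of all admissible ellipses (over all $m>0$) is the semiline $$\mathcal{C}=\Big\{(u,v)\in\mathbb{R}^2:\ u=\frac{\lambda}{2}-\frac{\tan\theta}{2}v,\ v\in(0,+\infty)\Big\}.$$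
   Context: The center of an ellipse $\{\varphi=0\}$ is the point where $\nabla\varphi=0$. *)

(* Defs.v *)
From Stdlib Require Import Reals Lra.
From Coquelicot Require Import Coquelicot.
Open Scope R_scope.

Definition phi (a b c d : R) (al be : R) : R :=
  / 2 * (al ^ 2 + 2 * b * al * be + a * be ^ 2) + c * al + d * be.

Definition grad (f : R -> R -> R) (x y : R) : R * R :=
  (Derive (fun t => f t y) x, Derive (fun t => f x t) y).

Definition pos_multiple (v w : R * R) : Prop :=
  exists t : R, 0 < t /\ fst v = t * fst w /\ snd v = t * snd w.

(* A subset S of R^2 is an ellipse: the image of the unit circle under an
   invertible affine map, i.e. S = { x | |L (x - p)| = 1 } with L invertible. *)
Definition is_ellipse (S : R -> R -> Prop) : Prop :=
  exists p1 p2 l11 l12 l21 l22 : R,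
    l11 * l22 - l12 * l21 <> 0 /\
    forall x y : R,
      S x y <->
      (l11 * (x - p1) + l12 * (y - p2)) ^ 2
      + (l21 * (x - p1) + l22 * (y - p2)) ^ 2 = 1.

Definition is_center (f : R -> R -> R) (u v : R) : Prop :=
  grad f u v = (0, 0).

Definition P1P2 (lam th m a b c d : R) : Prop :=
  let n := m * tan th in
  let f := phi a b c d in
  f lam 0 = 0 /\ f 0 0 = 0 /\ f m n = 0 /\
  pos_multiple (0 - lam, 0 - 0)
    (- fst (grad f lam 0), - snd (grad f lam 0)) /\
  pos_multiple (m - 0, n - 0)
    (- fst (grad f 0 0), - snd (grad f 0 0)).

(* Main.v *)
Require Import Defs.
From Stdlib Require Import Reals Lra Psatz.
From Coquelicot Require Import Coquelicot.
Open Scope R_scope.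

Lemma grad_phi a b c d x y :
  grad (phi a b c d) x y = (x + b*y + c, b*x + a*y + d).
Proof.
  unfold grad, phi; f_equal; apply is_derive_unique; auto_derive; auto; field.
Qed.

Lemma not_ellipse a b c d : b*b - a >= 0 -> b*c - d >= 0 ->
  ~ is_ellipse (fun x y => phi a b c d x y = 0).
Proof.
  intros H1 H2 [p1 [p2 [l11 [l12 [l21 [l22 [HD HS]]]]]]].
  set (D := l11 * l22 - l12 * l21) in *.
  set (K := (l11*l11 + l21*l21) / (D*D)).
  assert (HD2 : 0 < D*D) by (apply Rsqr_pos_lt; auto).
  assert (HK : 0 <= K) by (unfold K; apply Rdiv_le_0_compat; nra).
  set (be := Rabs p2 + 1 + K).
  assert (Hbe : 0 <= be) by (unfold be; pose proof (Rabs_pos p2); lra).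
  set (De := (b*b - a)*be*be + 2*(b*c - d)*be + c*c).
  assert (HDe : 0 <= De) by (unfold De; nra).
  set (s := sqrt De).
  assert (Hs : s * s = De) by (apply sqrt_sqrt; auto).
  set (al := -(b*be + c) + s).
  assert (Hphi : phi a b c d al be = 0).
  { unfold phi, al. unfold De in Hs. nra. }
  apply HS in Hphi.
  set (w1 := l11 * (al - p1) + l12 * (be - p2)) in *.
  set (w2 := l21 * (al - p1) + l22 * (be - p2)) in *.
  assert (E : D * (be - p2) = l11 * w2 - l21 * w1) by (unfold D, w1, w2; ring).
  assert (CS : (l11 * w2 - l21 * w1)^2 <= l11*l11 + l21*l21).
  { assert (Hl : (l11 * w2 - l21 * w1)^2 + (l11*w1 + l21*w2)^2 = (l11*l11+l21*l21)*(w1^2+w2^2)) by ring.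
    rewrite Hphi in Hl. pose proof (pow2_ge_0 (l11*w1+l21*w2)). lra. }
  rewrite <- E in CS.
  assert (Hbp : 1 + K <= be - p2) by (unfold be; pose proof (Rle_abs p2); lra).
  assert (HKD : K * (D*D) = l11*l11 + l21*l21) by (unfold K; field; nra).
  assert (Hsq : K < (be - p2)^2) by nra.
  nra.
Qed.

Lemma is_ell a b c d u v : a - b*b > 0 -> u + b*v + c = 0 -> b*u + a*v + d = 0 ->
  v <> 0 -> is_ellipse (fun x y => phi a b c d x y = 0).
Proof.
  intros Ha Hc1 Hc2 Hv.
  set (q := u*u + 2*b*u*v + a*v*v).
  assert (Hq : 0 < q).
  { assert (q = (u+b*v)^2 + (a-b*b)*(v*v)) by (unfold q; ring).
    assert (0 < v*v) by (apply Rsqr_pos_lt; auto).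
    pose proof (pow2_ge_0 (u+b*v)). nra. }
  set (r := sqrt q). assert (Hr : r*r = q) by (apply sqrt_sqrt; lra).
  assert (Hr0 : 0 < r) by (apply sqrt_lt_R0; auto).
  set (e := sqrt (a - b*b)). assert (He : e*e = a - b*b) by (apply sqrt_sqrt; lra).
  assert (He0 : 0 < e) by (apply sqrt_lt_R0; auto).
  exists u, v, (/r), (b/r), 0, (e/r). split.
  - replace (/ r * (e / r) - b / r * 0) with (e / (r*r)) by (field; lra).
    apply Rgt_not_eq, Rdiv_lt_0_compat; nra.
  - intros x y.
    assert (c = -u - b*v) by lra. assert (d = -b*u - a*v) by lra. subst c d.
    assert (Eq : phi a b (-u - b*v) (-b*u - a*v) x y
      = /2 * ((x-u)*(x-u) + 2*b*(x-u)*(y-v) + a*(y-v)*(y-v) - q)) by (unfold phi, q; field).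
    assert (Eq2 : (/ r * (x - u) + b / r * (y - v)) ^ 2 + (0 * (x - u) + e / r * (y - v)) ^ 2
      = ((x-u)*(x-u) + 2*b*(x-u)*(y-v) + a*(y-v)*(y-v)) / q).
    { rewrite <- Hr. replace a with (e*e + b*b) at 1 by lra. field. lra. }
    rewrite Eq, Eq2. split; intro H.
    + assert (((x-u)*(x-u) + 2*b*(x-u)*(y-v) + a*(y-v)*(y-v)) = q) by lra.
      rewrite H0. field. lra.
    + apply (f_equal (fun z => z * q)) in H. field_simplify in H; lra.
Qed.

Theorem lemma3 (lam th : R) (Hlam : 0 < lam) (Hth1 : 0 < th) (Hth2 : th < PI / 2) :
  forall u v : R,
    (exists m : R, 0 < m /\
       exists a b c d : R,
         P1P2 lam th m a b c d /\
         is_ellipse (fun x y => phi a b c d x y = 0) /\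
         is_center (phi a b c d) u v)
    <->
    (u = lam / 2 - tan th / 2 * v /\ 0 < v).
Proof.
  intros u v.
  pose proof (tan_gt_0 th Hth1 Hth2) as Hk.
  set (k := tan th) in *.
  split.
  - intros [m [Hm [a [b [c [d [HP [HE HC]]]]]]]].
    unfold P1P2, is_center in *. rewrite !grad_phi in *. fold k in HP.
    destruct HP as [HX [_ [_ [[t [Ht [T1 T2]]] [s [Hs [S1 S2]]]]]]].
    simpl in *. injection HC; intros C2 C1.
    unfold phi in HX.
    assert (Hc : c = - lam / 2).
    { apply (Rmult_eq_reg_l lam); [|lra]. nra. }
    subst c.
    assert (Hd : d = - b * lam) by nra. subst d.
    assert (Hb : b = k / 2).
    { assert (E1 : s*lam = 2*m) by lra.
      assert (E2 : m*k = b*(s*lam)) by lra.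
      rewrite E1 in E2. apply (Rmult_eq_reg_l m); [|lra]. lra. }
    subst b.
    destruct (Rle_or_lt a (k/2*(k/2))) as [Ha|Ha].
    + exfalso. apply (not_ellipse a (k/2) (-lam/2) (-(k/2)*lam)); auto; nra.
    + split; [lra|].
      assert (v * (a - k/2*(k/2)) = k*lam/4) by nra.
      nra.
  - intros [Hu Hv].
    set (a := (k*lam/v + k*k)/4).
    assert (Ha : a - k/2*(k/2) > 0) by (unfold a; field_simplify; [|lra];
      apply Rlt_gt, Rdiv_lt_0_compat; nra).
    assert (HE : 0 < 1 + k*k + a*(k*k)) by nra.
    set (m := lam*(1+k*k)/(1+k*k+a*(k*k))).
    assert (Hm : 0 < m) by (unfold m; apply Rdiv_lt_0_compat; nra).
    assert (HmE : m * (1 + k*k + a*(k*k)) = lam*(1+k*k)) by (unfold m; field; lra).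
    exists m. split; auto.
    exists a, (k/2), (-lam/2), (-(k/2)*lam).
    assert (C1 : u + k/2*v + -lam/2 = 0) by lra.
    assert (C2 : k/2*u + a*v + -(k/2)*lam = 0) by (rewrite Hu; unfold a; field; lra).
    split; [|split].
    + unfold P1P2. fold k. rewrite !grad_phi. simpl.
      split; [unfold phi; field|].
      split; [unfold phi; field|].
      split.
      { unfold phi.
        replace (/ 2 * (m ^ 2 + 2 * (k / 2) * m * (m * k) + a * (m * k) ^ 2) +
          - lam / 2 * m + - (k / 2) * lam * (m * k))
          with (/2 * m * (m * (1 + k*k + a*(k*k)) - lam*(1+k*k))) by field.
        rewrite HmE. ring. }
      split.
      { exists 2. split; [lra|]. simpl. split; field. }
      { exists (2*m/lam). split; [apply Rdiv_lt_0_compat; lra|]. simpl.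
        split; field; lra. }
    + apply (is_ell a (k/2) (-lam/2) (-(k/2)*lam) u v); auto; lra.
    + unfold is_center. rewrite grad_phi. rewrite C1, C2. reflexivity.
Qed.
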